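(* Let $(M,d)$ be a metric space, $\mathsf{P}\subseteq M$ a set of $n$ points, and $1\le\ell\le k\le n$ integers; put $m=\lfloor k/\ell\rfloor$. Let $c\ge1$ and let $Q=\{q_1,\dots,q_m\}\subseteq\mathsf{P}$ be a $c$-approximate solution to the (non-fault-tolerant) $m$-center problem on $\mathsf{P}$, i.e. $\max_{p\in\mathsf{P}} d_Q(p,1)\le c\, r_{\mathrm{cen}}$ where $r_{\mathrm{cen}}=\min_{S\subseteq\mathsf{P},|S|=m}\max_{p\in\mathsf{P}} d_S(p,1)$. Let $C\subseteq\mathsf{P}$ be any set with $|C|=k$ and $C\supseteq\bigcup_{i=1}^m N_{\mathsf{P}}(q_i,\ell)$. Then $$\max_{p\in\mathsf{P}} d_C(p,\ell)\le (1+2c)\,r_{\mathrm{opt}},\qquad\text{where } r_{\mathrm{opt}}=\min_{C'\subseteq\mathsf{P},|C'|=k}\max_{p\in\mathsf{P}} d_{C'}(p,\ell).$$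
   Context: For a finite set $S\subseteq M$, a point $p\in M$ and an integer $1\le i\le|S|$, $d_S(p,i)$ denotes the radius of the smallest closed ball centered at $p$ containing at least $i$ points of $S$. The $i$ nearest neighbors of $p$ in $S$ are determined by ordering $s\in S$ lexicographically by $(d(p,s),\text{index of }s)$ (points of $\mathsf{P}=\{p_1,\dots,p_n\}$ are indexed); $N_S(p,i)$ is the set of the first $i$ points in this order, so $|N_S(p,i)|=i$. The fault-tolerant $k$-center cost of $C$ is $\max_{p\in\mathsf{P}} d_C(p,\ell)$; $\ell=1$ is ordinary $k$-center. *)

(* Defs.v *)
From HB Require Import structures.
From mathcomp Require Import all_boot all_order all_algebra.
Set Implicit Arguments. Unset Strict Implicit. Unset Printing Implicit Defensive.
Import Order.TTheory GRing.Theory Num.Theory.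
Local Open Scope ring_scope.

(* minimum of F over the elements of a finite type satisfying P (0 if none) *)
Definition fmin (R : realDomainType) (T : finType) (P : pred T) (F : T -> R) : R :=
  match [pick t | P t] with
  | Some t0 => \big[Num.min/F t0]_(t | P t) F t
  | None => 0
  end.

Definition fmax (R : realDomainType) (T : finType) (P : pred T) (F : T -> R) : R :=
  match [pick t | P t] with
  | Some t0 => \big[Num.max/F t0]_(t | P t) F t
  | None => 0
  end.

Definition is_metric (R : realDomainType) (M : Type) (d : M -> M -> R) : Prop :=
  (forall a b, d a b = 0 <-> a = b) /\
  (forall a b, d a b = d b a) /\
  (forall a b c, d a c <= d a b + d b c).

Section Defs.
Variables (R : realDomainType) (M : Type) (d : M -> M -> R) (n : nat)
          (pt : 'I_n -> M).
(* the point set P = {pt i | i : 'I_n}; subsets of P are index sets {set 'I_n} *)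

(* d_S(p,i): smallest radius r such that the closed ball B(p,r) contains at
   least i points of S; the minimum is attained at a distance d(p,s), s in S. *)
Definition dS (S : {set 'I_n}) (p : M) (i : nat) : R :=
  fmin (fun s => (s \in S) && leq i #|[set t in S | d p (pt t) <= d p (pt s)]|)
       (fun s => d p (pt s)).

Definition lexlt (p : M) (t s : 'I_n) : bool :=
  (d p (pt t) < d p (pt s)) || ((d p (pt t) == d p (pt s)) && (val t < val s)%N).

(* N_S(p,i): the first i points of S in that order *)
Definition NN (S : {set 'I_n}) (p : M) (i : nat) : {set 'I_n} :=
  [set s in S | leq #|[set t in S | lexlt p t s]|.+1 i].

Definition ftcost (C : {set 'I_n}) (l : nat) : R :=
  fmax predT (fun j : 'I_n => dS C (pt j) l).

Definition ropt (k l : nat) : R :=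
  fmin (fun C' : {set 'I_n} => #|C'| == k) (fun C' => ftcost C' l).
End Defs.

(* Main.v *)
Require Import Defs.
From HB Require Import structures.
From mathcomp Require Import all_boot all_order all_algebra.
From mathcomp Require Import zify lra.
Import Order.TTheory GRing.Theory Num.Theory.
Local Open Scope ring_scope.

Lemma fmin_le (R : realDomainType) (T : finType) (P : pred T) (F : T -> R) t :
  P t -> fmin P F <= F t.
Proof.
move=> Pt; rewrite /fmin; case: pickP => [t0 Pt0|/(_ t)]; last by rewrite Pt.
by rewrite (bigD1 t) //= ge_min lexx.
Qed.

Lemma fmin_attain (R : realDomainType) (T : finType) (P : pred T) (F : T -> R) t :
  P t -> exists2 u, P u & fmin P F = F u.
Proof.
move=> Pt; rewrite /fmin; case: pickP => [t0 Pt0|/(_ t)]; last by rewrite Pt.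
apply: (big_ind (fun v => exists2 u, P u & v = F u)); first by exists t0.
- move=> x y [a Pa ->] [b Pb ->].
  have [h|h] := leP (F a) (F b).
  + by exists a => //; rewrite min_l.
  + by exists b => //; rewrite min_r // ltW.
- by move=> i Pi; exists i.
Qed.

Lemma fmax_ge (R : realDomainType) (T : finType) (P : pred T) (F : T -> R) t :
  P t -> F t <= fmax P F.
Proof.
move=> Pt; rewrite /fmax; case: pickP => [t0 Pt0|/(_ t)]; last by rewrite Pt.
by rewrite (bigD1 t) //= le_max lexx.
Qed.

Lemma fmax_le (R : realDomainType) (T : finType) (P : pred T) (F : T -> R) b t :
  P t -> (forall u, P u -> F u <= b) -> fmax P F <= b.
Proof.
move=> Pt hb; rewrite /fmax; case: pickP => [t0 Pt0|/(_ t)]; last by rewrite Pt.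
apply: (big_ind (fun v => v <= b)); first exact: hb.
- by move=> x y hx hy; rewrite ge_max hx hy.
- exact: hb.
Qed.

Lemma fmax_arg (R : realDomainType) (T : finType) (P : pred T) (F : T -> R) t :
  P t -> exists2 u, P u & forall v, P v -> F v <= F u.
Proof.
move=> Pt.
have [u Pu e] : exists2 u, P u & fmax P F = F u.
  rewrite /fmax; case: pickP => [t0 Pt0|/(_ t)]; last by rewrite Pt.
  apply: (big_ind (fun v => exists2 u, P u & v = F u)); first by exists t0.
  - move=> x y [a Pa ->] [b Pb ->].
    have [h|h] := leP (F a) (F b).
    + by exists b => //; rewrite max_r.
    + by exists a => //; rewrite max_l // ltW.
  - by move=> i Pi; exists i.
exists u => // v Pv; rewrite -e; exact: fmax_ge.
Qed.

Lemma dS_wit (R : realDomainType) (M : Type) (d : M -> M -> R) (n : nat)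
  (pt : 'I_n -> M) (S : {set 'I_n}) (p : M) (i : nat) :
  (0 < #|S|)%N -> (i <= #|S|)%N ->
  exists2 s, (s \in S) && (i <= #|[set t in S | (d p (pt t) <= d p (pt s))%R]|)%N
           & dS d pt S p i = d p (pt s).
Proof.
move=> /card_gt0P [s1 s1S] iS.
have [s0 s0S hs0] := @fmax_arg _ _ (fun s => s \in S) (fun s => d p (pt s)) _ s1S.
have H : (s0 \in S) && (i <= #|[set t in S | (d p (pt t) <= d p (pt s0))%R]|)%N.
  rewrite s0S /=; apply: leq_trans iS _; apply: subset_leq_card.
  by apply/subsetP => t tS; rewrite inE tS hs0.
have [u hu e] := @fmin_attain _ _
  (fun s => (s \in S) && (i <= #|[set t in S | (d p (pt t) <= d p (pt s))%R]|)%N)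
  (fun s => d p (pt s)) s0 H.
by exists u.
Qed.

Lemma pad_set (n m : nat) (X : {set 'I_n}) :
  (#|X| <= m)%N -> (m <= n)%N -> exists2 S : {set 'I_n}, X \subset S & #|S| = m.
Proof.
move e : (m - #|X|)%N => g; elim: g X e => [|g IH] X e Xm mn.
  exists X; first exact: subxx.
  by apply/eqP; rewrite eqn_leq Xm -subn_eq0 e.
have : ~~ ([set: 'I_n] \subset X).
  apply/negP => /subset_leq_card; rewrite cardsT card_ord; lia.
case/subsetPn => y _ yX.
have cY : #|y |: X| = #|X|.+1 by rewrite cardsU1 yX.
have [|||S h1 h2] := IH (y |: X); [lia|lia|done|].
by exists S => //; apply: subset_trans h1; apply: subsetUr.
Qed.

Lemma NN_card (R : realDomainType) (M : Type) (d : M -> M -> R) (n : nat)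
  (pt : 'I_n -> M) (p : M) (l : nat) :
  (l <= n)%N -> #|NN d pt [set: 'I_n] p l| = l.
Proof.
move=> ln.
pose rk s := #|[set t in [set: 'I_n] | lexlt d pt p t s]|.
have irr s : ~~ lexlt d pt p s s by rewrite /lexlt ltxx eqxx ltnn.
have tr a b c : lexlt d pt p a b -> lexlt d pt p b c -> lexlt d pt p a c.
  rewrite /lexlt => /orP[h1|/andP[/eqP h1 h1']] /orP[h2|/andP[/eqP h2 h2']].
  - by rewrite (lt_trans h1 h2).
  - by rewrite -h2 h1.
  - by rewrite h1 h2.
  - by rewrite h1 h2 eqxx (ltn_trans h1' h2') orbT.
have tot a b : a != b -> lexlt d pt p a b || lexlt d pt p b a.
  move=> ne; rewrite /lexlt.
  have [h|h|h] := ltgtP (d p (pt a)) (d p (pt b)) => //=.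
  have [h'|h'|h'] := ltngtP (val a) (val b) => //.
  by move/val_inj: h' ne => ->; rewrite eqxx.
have rkn s : (rk s < n)%N.
  rewrite /rk -[n in (_ < n)%N]card_ord -cardsT; apply: proper_card.
  apply/properP; split; first exact: subsetT.
  by exists s; rewrite ?inE //= (negbTE (irr s)).
pose rk' s : 'I_n := Ordinal (rkn s).
have lt_rk a b : lexlt d pt p a b -> (rk a < rk b)%N.
  move=> hab; apply: proper_card; apply/properP; split.
    by apply/subsetP => t; rewrite !inE /= => h; exact: tr h hab.
  by exists a; rewrite !inE /= ?hab ?(negbTE (irr a)).
have rkinj : injective rk'.
  move=> a b /(congr1 val) /= e; apply/eqP; apply: contraT => ne.
  by case/orP: (tot _ _ ne) => /lt_rk; rewrite e ltnn.
have -> : NN d pt [set: 'I_n] p l = rk' @^-1: [set i : 'I_n | (i < l)%N].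
  by apply/setP => s; rewrite !inE.
rewrite card_preimset //.
have -> : [set i : 'I_n | (i < l)%N] = [set widen_ord ln j | j : 'I_l].
  apply/setP => i; rewrite inE; apply/idP/imsetP.
    by move=> il; exists (Ordinal il) => //; apply: val_inj.
  by case=> j _ ->; rewrite /= ltn_ord.
by rewrite card_imset ?card_ord //; by move=> x y /(congr1 val) /= e; apply: val_inj.
Qed.

Theorem theorem2 (R : realFieldType) (M : Type) (d : M -> M -> R)
  (n : nat) (pt : 'I_n -> M) (k l m : nat) (c : R)
  (Q C : {set 'I_n}) :
  is_metric d ->
  injective pt ->
  (1 <= l)%N -> (l <= k)%N -> (k <= n)%N ->
  m = (k %/ l)%N ->
  1 <= c ->
  #|Q| = m ->
  ftcost d pt Q 1 <= c * ropt d pt m 1 ->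
  #|C| = k ->
  (\bigcup_(q in Q) NN d pt [set: 'I_n] (pt q) l) \subset C ->
  ftcost d pt C l <= (1 + 2 * c) * ropt d pt k l.
Proof.
move=> [d0 [dsym dtri]] _ l1 lk kn mE c1 Qm hQ Ck hsub.
have dxx a : d a a = 0 by apply/d0.
have dge0 a b : 0 <= d a b.
  by have := dtri a b a; rewrite dxx (dsym b a); lra.
have n0 : (0 < n)%N by lia.
pose j0 : 'I_n := Ordinal n0.
have [S0 _ S0k] := @pad_set n k set0 ltac:(by rewrite cards0) kn.
have [Cs /eqP Csk rE] := @fmin_attain _ _ (fun C' : {set 'I_n} => #|C'| == k)
   (fun C' => ftcost d pt C' l) S0 (introT eqP S0k).
set r := ropt d pt k l.
have rE' : r = ftcost d pt Cs l by rewrite /r /ropt rE.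
have hball j : dS d pt Cs (pt j) l <= r.
  rewrite rE'; exact: (@fmax_ge _ _ predT (fun j => dS d pt Cs (pt j) l) j).
have Cs0 : (0 < #|Cs|)%N by rewrite Csk; lia.
have Csl : (l <= #|Cs|)%N by rewrite Csk.
have ball q : (l <= #|[set t in Cs | (d (pt q) (pt t) <= r)%R]|)%N.
  have [s /andP[sC hs] e] := @dS_wit _ _ d n pt Cs (pt q) l Cs0 Csl.
  apply: leq_trans hs _; apply: subset_leq_card; apply/subsetP => t.
  rewrite !inE => /andP[-> h] /=; apply: le_trans h _; rewrite -e; exact: hball.
have r0 : 0 <= r.
  have /card_gt0P [t] : (0 < #|[set t in Cs | (d (pt j0) (pt t) <= r)%R]|)%N.
    exact: leq_trans (ball j0).
  by rewrite inE => /andP[_ h]; exact: le_trans (dge0 _ _) h.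
have hNN q s : s \in NN d pt [set: 'I_n] (pt q) l -> d (pt q) (pt s) <= r.
  rewrite inE => /andP[_ hs]; rewrite leNgt; apply/negP => hlt.
  have : (#|[set t in Cs | (d (pt q) (pt t) <= r)%R]| <=
          #|[set t in [set: 'I_n] | lexlt d pt (pt q) t s]|)%N.
    apply: subset_leq_card; apply/subsetP => t; rewrite !inE => /andP[_ h] /=.
    by rewrite /lexlt (le_lt_trans h hlt).
  move/(leq_trans (ball q)) => h2; move: (leq_ltn_trans h2 hs); by rewrite ltnn.
have hC p q : q \in Q -> dS d pt C p l <= d p (pt q) + r.
  move=> qQ.
  have NNc := @NN_card _ _ d n pt (pt q) l (leq_trans lk kn).
  have /card_gt0P [s1 s1N] : (0 < #|NN d pt [set: 'I_n] (pt q) l|)%N by rewrite NNc.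
  have [s sN hs] := @fmax_arg _ _ (fun s => s \in NN d pt [set: 'I_n] (pt q) l)
     (fun s => d p (pt s)) s1 s1N.
  have NC : NN d pt [set: 'I_n] (pt q) l \subset C.
    apply: subset_trans hsub; exact: (bigcup_sup q qQ).
  have sC : s \in C := subsetP NC s sN.
  apply: (@le_trans _ _ (d p (pt s))).
    rewrite /dS.
    apply: (@fmin_le _ _ (fun s' => (s' \in C) &&
       (l <= #|[set t in C | (d p (pt t) <= d p (pt s'))%R]|)%N) (fun s => d p (pt s)) s).
    rewrite sC /= -[X in (X <= _)%N]NNc; apply: subset_leq_card; apply/subsetP => t tN.
    by rewrite inE (subsetP NC t tN) hs.
  apply: le_trans (dtri _ (pt q) _) _; rewrite lerD2l; exact: hNN.
pose sep (X : {set 'I_n}) := [forall x in X, forall y in X,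
   (x != y) ==> (2 * r < d (pt x) (pt y))].
have sep0 : sep set0 by apply/forall_inP => x; rewrite inE.
have [X sepX maxX] : exists2 X, sep X & forall Y, sep Y -> (#|Y| <= #|X|)%N.
  case: (@arg_maxnP _ set0 sep (fun X => #|X|) sep0) => X sX mX.
  by exists X => // Y /mX.
have sep_lt x y : x \in X -> y \in X -> x != y -> 2 * r < d (pt x) (pt y).
  move=> xX yX nxy.
  by move/forall_inP: sepX => /(_ x xX)/forall_inP/(_ y yX)/implyP; apply.
have cov p : exists2 x, x \in X & d (pt p) (pt x) <= 2 * r.
  case: (boolP [exists x in X, d (pt p) (pt x) <= 2 * r]) =>
     [/exists_inP [x xX h]|/exists_inPn hn]; first by exists x.
  have pX : p \notin X.
    apply/negP => pX; move: (hn p pX); rewrite dxx; apply/negP/negPn; lra.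
  have : sep (p |: X).
    apply/forall_inP => x; rewrite in_setU1 => hx.
    apply/forall_inP => y; rewrite in_setU1 => hy; apply/implyP => nxy.
    case/orP: hx => [/eqP ex|xX]; case/orP: hy => [/eqP ey|yX].
    - by rewrite ex ey eqxx in nxy.
    - by rewrite ex ltNge; exact: hn y yX.
    - by rewrite ey dsym ltNge; exact: hn x xX.
    - exact: sep_lt.
  move/maxX; by rewrite cardsU1 pX ltnn.
have Xm : (#|X| <= m)%N.
  rewrite mE leq_divRL //.
  have e1 t : (#|[set t0 in Cs | (d (pt t) (pt t0) <= r)%R]| =
                 \sum_(t0 in Cs) ((d (pt t) (pt t0) <= r)%R : nat))%N.
    rewrite -sum1_card (eq_bigl (fun t0 => (t0 \in Cs) && (d (pt t) (pt t0) <= r))); last first.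
      by move=> t0; rewrite inE.
    by rewrite big_mkcondr /=; apply: eq_bigr => t0 _; case: (d _ _ <= r).
  have h1 : (#|X| * l <= \sum_(x in X) #|[set t0 in Cs | (d (pt x) (pt t0) <= r)%R]|)%N.
    by rewrite -sum_nat_const; apply: leq_sum => x _; exact: ball.
  apply: leq_trans h1 _.
  rewrite (eq_bigr _ (fun x _ => e1 x)) exchange_big /= -Ck.
  have CsC : (#|Cs| <= #|C|)%N by rewrite Csk Ck.
  apply: leq_trans CsC; rewrite -sum1_card; apply: leq_sum => t _.
  case: (boolP [exists x in X, d (pt x) (pt t) <= r]) =>
     [/exists_inP [x0 x0X h0]|/exists_inPn hn].
  - rewrite (bigD1 x0) //= h0 /= big1 // => y /andP[yX nyx].
    apply/eqP; rewrite eqb0; apply/negP => hy.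
    move: (sep_lt y x0 yX x0X nyx); have := dtri (pt y) (pt t) (pt x0).
    rewrite (dsym (pt t) (pt x0)); lra.
  - by rewrite big1 // => x xX; rewrite (negbTE (hn x xX)).
have [S XS Sm] := @pad_set n m X Xm ltac:(by rewrite mE; apply: leq_trans (leq_div k l) kn).
have ropt_m : ropt d pt m 1 <= 2 * r.
  apply: (@le_trans _ _ (ftcost d pt S 1)).
    exact: (@fmin_le _ _ (fun C' : {set 'I_n} => #|C'| == m)
              (fun C' => ftcost d pt C' 1) S (introT eqP Sm)).
  apply: (@fmax_le _ _ predT (fun j => dS d pt S (pt j) 1) _ j0) => // p _.
  have [x xX hx] := cov p.
  have xS := subsetP XS x xX.
  apply: le_trans hx; rewrite /dS.
  apply: (@fmin_le _ _ (fun s' => (s' \in S) &&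
     (1 <= #|[set t in S | (d (pt p) (pt t) <= d (pt p) (pt s'))%R]|)%N)
     (fun s => d (pt p) (pt s)) x).
  rewrite xS /= card_gt0; apply/set0Pn; exists x; by rewrite inE xS lexx.
have hQp p : exists2 q, q \in Q & d (pt p) (pt q) <= 2 * c * r.
  have Q0 : (0 < #|Q|)%N by rewrite Qm mE divn_gt0.
  have [q /andP[qQ _] e] := @dS_wit _ _ d n pt Q (pt p) 1 Q0 Q0.
  exists q => //; rewrite -e.
  apply: (@le_trans _ _ (ftcost d pt Q 1)).
    exact: (@fmax_ge _ _ predT (fun j => dS d pt Q (pt j) 1) p).
  apply: le_trans hQ _.
  have : c * ropt d pt m 1 <= c * (2 * r) by rewrite ler_wpM2l //; lra.
  by rewrite mulrA [c * 2]mulrC.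
apply: (@fmax_le _ _ predT (fun j => dS d pt C (pt j) l) _ j0) => // p _.
have [q qQ hq] := hQp p.
apply: le_trans (hC (pt p) q qQ) _.
rewrite mulrDl mul1r; lra.
Qed.
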